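(* Let $K\in\mathcal S_n$ be nonempty and bounded and let $u\in S^{n-1}$. Assume that for every $x\in P_{u^\perp}(K)$, writing $K\cap(x+\mathbb Ru)=[x+su,x+tu]$, there exist $z,w\in\mathbb R^n$ such that the lens $L=B(z,1)\cap B(w,1)$ satisfies $K\subseteq L$, $x+tu\in\partial L$, $x+su\in\partial L$, and $S_u(L)\in\mathcal S_n$. Then $S_u(K)\in\mathcal S_n$.
   Context: For $x\in\mathbb R^n$, $B(x,1)$ is the closed Euclidean unit ball centered at $x$. The class $\mathcal S_n$ of ball-bodies consists of all intersections of families of closed Euclidean unit balls in $\mathbb R^n$. $P_{u^\perp}$ denotes orthogonal projection onto $u^\perp$. For a compact convex set $K$ and $u\in S^{n-1}$, for each $x\in P_{u^\perp}(K)$ write $K\cap(x+\mathbb Ru)=[x+a(x)u,x+b(x)u]$; the Steiner symmetral is $S_u(K)=\{x+yu: x\in P_{u^\perp}(K),\ |y|\le |b(x)-a(x)|/2\}$. *)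

(* Defs.v *)
From HB Require Import structures.
From mathcomp Require Import all_boot all_order all_algebra.
From mathcomp Require Import reals.
Set Implicit Arguments. Unset Strict Implicit. Unset Printing Implicit Defensive.
Import Order.TTheory GRing.Theory Num.Theory.
Local Open Scope ring_scope.

Section Defs.
Variables (R : realType) (n : nat).
Notation V := 'rV[R]_n.

Definition edot (x y : V) : R := (x *m y^T) 0 0.
Definition enorm (x : V) : R := Num.sqrt (edot x x).

Definition cball (c : V) : V -> Prop := fun y => enorm (y - c) <= 1.

Definition ball_body (K : V -> Prop) : Prop :=
  exists F : V -> Prop, forall y, K y <-> (forall c, F c -> cball c y).

Definition lens (z w : V) : V -> Prop := fun y => cball z y /\ cball w y.

Definition ebdry (L : V -> Prop) (p : V) : Prop :=
  forall e : R, 0 < e ->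
    (exists y, enorm (y - p) < e /\ L y) /\ (exists y, enorm (y - p) < e /\ ~ L y).

(* orthogonal projection onto u^perp (u a unit vector) *)
Definition proj_perp (u x : V) : V := x - edot x u *: u.

Definition in_proj (u : V) (K : V -> Prop) (x : V) : Prop :=
  exists k, K k /\ x = proj_perp u k.

(* Steiner symmetral (for compact convex K, where K ∩ (x+Ru) is a segment
   [x+a(x)u, x+b(x)u]):  x + y u with x ∈ P_{u^perp}(K) and |y| <= (b(x)-a(x))/2.
   Since the chord is the closed segment, |y| <= (b-a)/2 iff there are
   s,t with x+su, x+tu ∈ K and 2|y| <= t - s. *)
Definition steiner (u : V) (K : V -> Prop) : V -> Prop :=
  fun p => exists x y, in_proj u K x /\ p = x + y *: u /\
    exists s t, K (x + s *: u) /\ K (x + t *: u) /\ 2 * `|y| <= t - s.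

Definition bounded_set (K : V -> Prop) : Prop :=
  exists M : R, forall x, K x -> enorm x <= M.

End Defs.

(* Main.v *)
Require Import Defs.
From HB Require Import structures.
From mathcomp Require Import all_boot all_order all_algebra.
From mathcomp Require Import all_classical all_reals all_analysis.
From mathcomp Require Import ring lra.
Import Order.TTheory GRing.Theory Num.Theory.
Import numFieldNormedType.Exports.
Local Open Scope classical_set_scope.
Local Open Scope ring_scope.

Section Alg.
Variables (R : realType) (n : nat).
Notation V := 'rV[R]_n.
Implicit Types (x y z a b c e : V).

Lemma edotE x y : edot x y = \sum_j x 0 j * y 0 j.
Proof. by rewrite /edot !mxE; apply: eq_bigr => j _; rewrite mxE. Qed.

Lemma edotC x y : edot x y = edot y x.
Proof. by rewrite !edotE; apply: eq_bigr => j _; rewrite mulrC. Qed.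

Lemma edotDl x y z : edot (x + y) z = edot x z + edot y z.
Proof. by rewrite !edotE -big_split; apply: eq_bigr => j _; rewrite mxE mulrDl. Qed.

Lemma edotZl (k : R) x y : edot (k *: x) y = k * edot x y.
Proof. by rewrite !edotE mulr_sumr; apply: eq_bigr => j _; rewrite mxE mulrA. Qed.

Lemma edotNl x y : edot (- x) y = - edot x y.
Proof. by rewrite -scaleN1r edotZl mulN1r. Qed.

Lemma edotBl x y z : edot (x - y) z = edot x z - edot y z.
Proof. by rewrite edotDl edotNl. Qed.

Lemma edotDr x y z : edot z (x + y) = edot z x + edot z y.
Proof. by rewrite edotC edotDl !(edotC z). Qed.

Lemma edotZr (k : R) x y : edot y (k *: x) = k * edot y x.
Proof. by rewrite edotC edotZl edotC. Qed.

Lemma edotNr x y : edot y (- x) = - edot y x.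
Proof. by rewrite edotC edotNl edotC. Qed.

Lemma edotBr x y z : edot z (x - y) = edot z x - edot z y.
Proof. by rewrite edotDr edotNr. Qed.

Lemma edot0l x : edot 0 x = 0.
Proof. by rewrite -(scale0r 0) edotZl mul0r. Qed.

Lemma edot_ge0 x : 0 <= edot x x.
Proof. by rewrite edotE; apply: sumr_ge0 => j _; rewrite -expr2 sqr_ge0. Qed.

Lemma edot_eq0 x : edot x x = 0 -> x = 0.
Proof.
rewrite edotE => /eqP; rewrite psumr_eq0; last by move=> j _; rewrite -expr2 sqr_ge0.
move=> /allP H; apply/rowP => j; rewrite mxE.
have /H : j \in index_enum 'I_n by rewrite mem_index_enum.
by rewrite /= mulf_eq0 orbb => /eqP.
Qed.

Lemma coord_le x (j : 'I_n) : x 0 j ^+ 2 <= edot x x.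
Proof.
rewrite edotE (bigD1 j) //= -expr2 lerDl.
by apply: sumr_ge0 => i _; rewrite -expr2 sqr_ge0.
Qed.

Lemma edot_sq x y : edot (x + y) (x + y) = edot x x + 2 * edot x y + edot y y.
Proof. rewrite !(edotDl, edotDr) (edotC y x); ring. Qed.

Lemma edot_sqB x y : edot (x - y) (x - y) = edot x x - 2 * edot x y + edot y y.
Proof. rewrite !(edotBl, edotBr) (edotC y x); ring. Qed.

Lemma edot_sqZ (k : R) x : edot (k *: x) (k *: x) = k ^+ 2 * edot x x.
Proof. rewrite edotZl edotZr; ring. Qed.

Lemma cballE c y : cball c y <-> edot (y - c) (y - c) <= 1.
Proof.
rewrite /cball /enorm -[X in _ <= X]sqrtr1 ler_sqrt //.
Qed.

Lemma enorm_lt x (e : R) : 0 < e -> enorm x < e -> edot x x < e ^+ 2.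
Proof.
move=> e0; rewrite /enorm => H.
have s0 := sqrtr_ge0 (edot x x).
rewrite -(sqr_sqrtr (edot_ge0 x)); nra.
Qed.

Lemma enorm1 x : enorm x = 1 -> edot x x = 1.
Proof. by rewrite /enorm => H; rewrite -(sqr_sqrtr (edot_ge0 x)) H expr1n. Qed.

Lemma edot_amgm x y (t : R) : 0 < t -> 2 * edot x y <= (edot x x + t ^+ 2 * edot y y) / t.
Proof.
move=> t0; have := edot_ge0 (x - t *: y).
rewrite edot_sqB edotZr edot_sqZ => H.
rewrite ler_pdivlMr //; nra.
Qed.


Lemma edot_perp g (u : V) (al : R) : edot g u = 0 -> edot u u = 1 ->
  edot (g + al *: u) (g + al *: u) = edot g g + al ^+ 2.
Proof. move=> gu uu; rewrite edot_sq edotZr edot_sqZ gu uu; ring. Qed.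

Lemma proj_perp_u (u x : V) : edot u u = 1 -> edot (proj_perp u x) u = 0.
Proof. move=> uu; rewrite /proj_perp edotBl edotZl uu; ring. Qed.

Lemma proj_decomp (u x : V) : x = proj_perp u x + edot x u *: u.
Proof. by rewrite /proj_perp subrK. Qed.

Lemma proj_lin (u x y : V) (al be : R) :
  proj_perp u (al *: x + be *: y) = al *: proj_perp u x + be *: proj_perp u y.
Proof.
rewrite /proj_perp !(edotDl, edotZl); apply/rowP => j; rewrite !mxE; ring.
Qed.

Lemma proj_id (u x : V) (r : R) : edot u u = 1 -> edot x u = 0 ->
  proj_perp u (x + r *: u) = x.
Proof.
move=> uu xu; rewrite /proj_perp edotDl edotZl xu uu add0r mulr1.
by rewrite addrK.
Qed.

Section BB.
Variables (K : V -> Prop) (F : V -> Prop).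
Hypothesis HK : forall y, K y <-> (forall c, F c -> cball c y).

Lemma fat k1 k2 (mu : R) e : K k1 -> K k2 -> 0 <= mu <= 1 -> edot e e <= 1 ->
  K (mu *: k1 + (1 - mu) *: k2 +
     (mu * (1 - mu) * edot (k1 - k2) (k1 - k2) / 2) *: e).
Proof.
move=> /HK H1 /HK H2 /andP[m0 m1] ee; apply/HK => c Fc.
have /cballE h1 := H1 c Fc; have /cballE h2 := H2 c Fc.
apply/cballE.
set a := k1 - c in h1 *; set b := k2 - c in h2 *.
have -> : k1 - k2 = a - b.
  by rewrite /a /b; apply/rowP => j; rewrite !mxE; ring.
set d := mu * (1 - mu) * edot (a - b) (a - b) / 2.
have -> : mu *: k1 + (1 - mu) *: k2 + d *: e - c =
   (mu *: a + (1 - mu) *: b) + d *: e.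
  by rewrite /a /b; apply/rowP => j; rewrite !mxE; ring.
rewrite /d.
set P := mu *: a + (1 - mu) *: b.
have hX : edot P P = mu * edot a a + (1 - mu) * edot b b
            - mu * (1 - mu) * edot (a - b) (a - b).
  rewrite /P (edot_sq (mu *: a)) !edot_sqZ edot_sqB edotZl edotZr; ring.
have hY := @edot_amgm P e 1 ltr01.
rewrite expr1n mul1r divr1 in hY.
rewrite (edot_sq P) edotZr edot_sqZ.
have D0 := edot_ge0 (a - b).
set D := edot (a - b) (a - b) in hX D0 *.
set X := edot P P in hX hY *.
set Y := edot P e in hY *.
have eta0 : 0 <= mu * (1 - mu) * D by apply: mulr_ge0 => //; apply: mulr_ge0; lra.
have hX' : X <= 1 - mu * (1 - mu) * D by rewrite hX; nra.
set eta := mu * (1 - mu) * D in eta0 hX' *.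
have X0 : 0 <= X := edot_ge0 P.
have e0 := edot_ge0 e.
nra.
Qed.

Lemma convK k1 k2 (mu : R) : K k1 -> K k2 -> 0 <= mu <= 1 ->
  K (mu *: k1 + (1 - mu) *: k2).
Proof.
move=> h1 h2 hm; have := fat _ _ _ 0 h1 h2 hm.
by rewrite edot0l ler01 scaler0 addr0; apply.
Qed.

Lemma support q v : K q -> edot v v = 1 ->
  (forall k, K k -> edot (k - q) v <= 0) -> forall k, K k -> cball (q - v) k.
Proof.
move=> Kq vv Hs k Kk; apply/cballE; rewrite leNgt; apply/negP => Hgt.
move: Hgt; have -> : k - (q - v) = (k - q) + v by apply/rowP => j; rewrite !mxE; ring.
rewrite edot_sq vv => Hgt.
have ha := Hs k Kk.
set a := edot (k - q) v in ha Hgt.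
set d2 := edot (k - q) (k - q) in Hgt.
have d20 : 0 < d2 by lra.
set lam := a / d2 + 1 / 2.
have hl : lam * d2 = a + d2 / 2 by rewrite /lam; field; lra.
have lam0 : 0 < lam by rewrite /lam; rewrite -(ltr_pM2r d20) mul0r mulrDl mulfVK ?gt_eqF //; lra.
have lam1 : lam <= 1 by rewrite /lam; rewrite -(ler_pM2r d20) mul1r mulrDl mulfVK ?gt_eqF //; lra.
have := fat _ _ lam v Kk Kq; rewrite vv lexx => /(_ _ isT).
rewrite (ltW lam0) lam1 => /(_ isT) Km.
have := Hs _ Km.
set dl := lam * (1 - lam) * d2 / 2.
have -> : lam *: k + (1 - lam) *: q + dl *: v - q = lam *: (k - q) + dl *: v.
  by apply/rowP => j; rewrite !mxE; ring.
rewrite edotDl !edotZl vv -/a /dl.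
nra.
Qed.

End BB.

Lemma ball_steiner (u c : V) (K : V -> Prop) : edot u u = 1 ->
  (forall k, K k -> cball c k) ->
  forall p, steiner u K p -> cball (proj_perp u c) p.
Proof.
move=> uu HK p [x [y [[k0 [Kk0 xE]] [-> [s [t [Ks [Kt Hy]]]]]]]].
set ga := edot c u.
set g := x - proj_perp u c.
have gu : edot g u = 0 by rewrite /g xE edotBl !proj_perp_u // subrr.
have E (al : R) : x + al *: u - c = g + (al - ga) *: u.
  by rewrite /g /ga /proj_perp; apply/rowP => j; rewrite !mxE; ring.
move: (HK _ Ks) (HK _ Kt) => /cballE; rewrite E edot_perp // => hs /cballE.
rewrite E edot_perp // => ht.
apply/cballE.
have -> : x + y *: u - proj_perp u c = g + y *: u.
  by rewrite /g; apply/rowP => j; rewrite !mxE; ring.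
rewrite edot_perp //.
have hy0 := normr_ge0 y.
have hy2 : 4 * y ^+ 2 <= (t - s) ^+ 2.
  rewrite -real_normK ?num_real //; nra.
have := sqr_ge0 ((t - ga) + (s - ga)).
nra.
Qed.



Lemma edotE' (x y : V) : edot x y = \sum_j x 0 j * y 0 j.
Proof. by rewrite /edot !mxE; apply: eq_bigr => j _; rewrite mxE. Qed.

Lemma edot_cont (f g : V -> V) : continuous f -> continuous g ->
  continuous (fun y => edot (f y) (g y)).
Proof.
move=> cf cg.
have -> : (fun y => edot (f y) (g y)) = (fun y => \sum_(j <- index_enum 'I_n) f y 0 j * g y 0 j).
  by apply: funext => y; rewrite edotE'.
elim: (index_enum 'I_n) => [|j s IH].
  under eq_fun do rewrite big_nil. exact: cst_continuous.
have -> : (fun y => \sum_(i <- j :: s) f y 0 i * g y 0 i) =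
   (fun y => f y 0 j * g y 0 j) + (fun y => \sum_(i <- s) f y 0 i * g y 0 i).
  by apply: funext => y; rewrite big_cons.
move=> y; apply: continuousD; last exact: IH.
apply: (@continuousM _ _ (fun y => f y 0 j) (fun y => g y 0 j)).
  exact: (@continuous_comp _ _ _ f (fun M : V => M 0 j) y (cf y) (@coord_continuous _ 1 n 0 j (f y))).
exact: (@continuous_comp _ _ _ g (fun M : V => M 0 j) y (cg y) (@coord_continuous _ 1 n 0 j (g y))).
Qed.


Lemma cballE' (c y : V) : cball c y <-> edot (y - c) (y - c) <= 1.
Proof. by rewrite /cball /enorm -[X in _ <= X]sqrtr1 ler_sqrt // ler01. Qed.

Lemma sub_cont (c : V) : continuous (fun y : V => y - c).
Proof. move=> y; apply: continuousB => //; exact: cst_continuous. Qed.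

Lemma proj_cont (u x : V) : continuous (fun y : V => proj_perp u y - x).
Proof.
move=> y; apply: (@continuousB _ _ _ (fun y => proj_perp u y) (fun=> x)); last exact: cst_continuous.
apply: (@continuousB _ _ _ id (fun y => edot y u *: u)); first exact: cvg_id.
apply: (@continuousZ _ _ _ (fun y => edot y u) (fun=> u)).
  apply: (@edot_cont id (fun=> u)); [move=> z; exact: cvg_id| exact: cst_continuous].
exact: cst_continuous.
Qed.

Lemma closed_sub (g : V -> R) (a : R) : continuous g -> closed [set y | g y <= a].
Proof.
move=> cg; have -> : [set y | g y <= a] = g @^-1` [set r | r <= a] by [].
by move/continuous_closedP : cg; apply; exact: closed_le.
Qed.

Lemma closed_bb (K F : V -> Prop) :
  (forall y, K y <-> (forall c, F c -> cball c y)) -> closed K.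
Proof.
move=> HK.
have -> : K = \bigcap_(c in F) [set y | edot (y - c) (y - c) <= 1].
  apply/seteqP; split => y /=.
    by move=> /HK H c Fc; apply/cballE'; exact: H.
  by move=> H; apply/HK => c Fc; apply/cballE'; exact: H.
apply: closed_bigI => c _; apply: closed_sub.
by apply: edot_cont; exact: sub_cont.
Qed.

Lemma bounded_conv (K : V -> Prop) : Defs.bounded_set K -> [bounded x | x in K].
Proof.
move=> [M0 HM0].
rewrite /bounded_near; near=> M => x Kx /=.
have -> : `|x| = mx_norm x by [].
rewrite mx_normrE.
apply/bigmax_leP; split => [|[i j] _]; first by near: M; apply: nbhs_pinfty_ge.
rewrite /= (ord1 i).
have h1 : `|x 0 j| <= M0.
  apply: le_trans (HM0 _ Kx); rewrite /enorm -sqrtr_sqr; apply: ler_wsqrtr.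
  exact: coord_le.
apply: le_trans h1 _; near: M; apply: nbhs_pinfty_ge; exact: num_real.
Unshelve. all: by end_near.
Qed.


Lemma argmin (A : set V) (g : V -> R) : compact A -> (exists a, A a) ->
  continuous g -> exists a, A a /\ forall b, A b -> g a <= g b.
Proof.
move=> cA [a Aa] cg.
have cgA : {within A, continuous g} by apply: continuous_subspaceT.
have [c /set_mem Ac Hc] := @compact_EVT_min _ R g A (ex_intro _ a Aa) cA cgA.
by exists c; split => // b Ab; apply: Hc; apply: mem_set.
Qed.

Lemma quad_line (z x u : V) (al be ga : R) : edot u u = 1 ->
  cball z (x + al *: u) -> cball z (x + be *: u) -> al < ga < be ->
  edot (x + ga *: u - z) (x + ga *: u - z) <= 1 - (ga - al) * (be - ga).
Proof.
move=> uu /cballE' ha /cballE' hb /andP[h1 h2].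
have E (r : R) : edot (x + r *: u - z) (x + r *: u - z) =
    edot (x - z) (x - z) + 2 * r * edot (x - z) u + r ^+ 2.
  have -> : x + r *: u - z = (x - z) + r *: u by apply/rowP => j; rewrite !mxE; ring.
  by rewrite edot_sq edotZr edot_sqZ uu; ring.
rewrite E in ha; rewrite E in hb; rewrite E.
set A := edot (x - z) (x - z) in ha hb *.
set B := edot (x - z) u in ha hb *.
have hba : 0 < be - al by lra.
rewrite -(ler_pM2l hba).
have p1 : 0 <= (be - ga) * (1 - (A + 2 * al * B + al ^+ 2)) by apply: mulr_ge0; lra.

have p2 : 0 <= (ga - al) * (1 - (A + 2 * be * B + be ^+ 2)) by apply: mulr_ge0; lra.
have id : (be - al) * (A + 2 * ga * B + ga ^+ 2) =
  (be - ga) * (A + 2 * al * B + al ^+ 2) + (ga - al) * (A + 2 * be * B + be ^+ 2)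
  - (ga - al) * (be - ga) * (be - al) by ring.
rewrite id; lra.
Qed.

Lemma ball_open (z p : V) (th : R) : 0 < th ->
  edot (p - z) (p - z) <= 1 - th ->
  forall y, edot (y - p) (y - p) < (th / 3) ^+ 2 -> cball z y.
Proof.
move=> th0 hp y hy; apply/cballE'.
have -> : y - z = (y - p) + (p - z) by apply/rowP => j; rewrite !mxE; ring.
rewrite edot_sq.
have th2 : 0 < th / 2 by lra.
have := @edot_amgm (y - p) (p - z) (th / 2) th2.
set Q := edot (y - p) (y - p) in hy *.
set X := edot (p - z) (p - z) in hp *.
set Y := edot (y - p) (p - z).
have X0 : 0 <= X := edot_ge0 _.
have Q0 : 0 <= Q := edot_ge0 _.
rewrite ler_pdivlMr // => hY.
rewrite -(ler_pM2l th0).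
have h1 : th * (X * (1 + th / 2)) <= th * ((1 - th) * (1 + th / 2)).
  by apply: ler_wpM2l; [lra| apply: ler_wpM2r; lra].
have h2 : th * Q <= th * (th / 3) ^+ 2 by apply: ler_wpM2l; lra.
have h3 : 0 <= th ^+ 2 by apply: sqr_ge0.
have h4 : 0 <= th ^+ 3 by apply: exprn_ge0; lra.
have e1 : th * (Q + 2 * Y + X) = th * Q + 2 * (2 * Y * (th / 2)) + th * X by field.
rewrite e1.
apply: (@le_trans _ _ (th * Q + 2 * (Q + (th / 2) ^+ 2 * X) + th * X)); first lra.
have e2 : th * Q + 2 * (Q + (th / 2) ^+ 2 * X) + th * X = th * Q + 2 * Q + th * (X * (1 + th / 2)) by field.
rewrite e2.
have hQ : 2 * Q <= 2 * (th / 3) ^+ 2 by lra.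
have e3 : th * (th / 3) ^+ 2 + 2 * (th / 3) ^+ 2 + th * ((1 - th) * (1 + th / 2)) = th - th ^+ 2 * (5 / 18) - th ^+ 3 * (7 / 18) by field.
have h5 : 0 <= th ^+ 2 * (5 / 18) by apply: mulr_ge0; lra.
have h6 : 0 <= th ^+ 3 * (7 / 18) by apply: mulr_ge0; lra.
lra.
Qed.

Lemma chord_interior (z w x u : V) (al be ga : R) : edot u u = 1 ->
  lens z w (x + al *: u) -> lens z w (x + be *: u) -> al < ga < be ->
  ~ ebdry (lens z w) (x + ga *: u).
Proof.
move=> uu [ha ha'] [hb hb'] hg Hb.
set th := (ga - al) * (be - ga).
have th0 : 0 < th by rewrite /th; case/andP: hg => h1 h2; apply: mulr_gt0; lra.
have [_ [y [hy nL]]] := Hb (th / 3) ltac:(lra).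
have hy2 := @enorm_lt _ (th / 3) ltac:(lra) hy.
apply: nL; split.
  exact: (@ball_open _ _ th th0 (@quad_line _ _ _ _ _ _ uu ha hb hg) _ hy2).
exact: (@ball_open _ _ th th0 (@quad_line _ _ _ _ _ _ uu ha' hb' hg) _ hy2).
Qed.

Lemma steiner_mono (u : V) (K L : V -> Prop) : (forall k, K k -> L k) ->
  forall p, steiner u K p -> steiner u L p.
Proof.
move=> KL p [x [y [[k [Kk xE]] [pE [s [t [Ks [Kt H]]]]]]]].
exists x, y; split; first by exists k; split => //; apply: KL.
by split => //; exists s, t; split; [apply: KL | split; [apply: KL|]].
Qed.


Lemma cont_dot (u : V) : continuous (fun k : V => edot k u).
Proof.
apply: (@edot_cont id (fun=> u)); [move=> z; exact: cvg_id| exact: cst_continuous].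
Qed.

Lemma cont_dotN (u : V) : continuous (fun k : V => edot (- k) u).
Proof.
apply: (@edot_cont (fun k => - k) (fun=> u)); last exact: cst_continuous.
move=> z; apply: continuousN; exact: cvg_id.
Qed.

Lemma dot_line (x u : V) (r : R) : edot u u = 1 -> edot x u = 0 ->
  edot (x + r *: u) u = r.
Proof. by move=> uu xu; rewrite edotDl edotZl xu uu add0r mulr1. Qed.

Section Body.
Variables (K F : V -> Prop) (u : V).
Hypothesis HK : forall y, K y <-> (forall c, F c -> cball c y).
Hypothesis Kb : Defs.bounded_set K.
Hypothesis uu : edot u u = 1.

Lemma compK : compact K.
Proof. exact: bounded_closed_compact (bounded_conv _ Kb) (closed_bb _ _ HK). Qed.

Lemma fiber x : in_proj u K x -> exists s t, s <= t /\ K (x + s *: u) /\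
  K (x + t *: u) /\ (forall y, (K y /\ exists r, y = x + r *: u) <->
     (exists r, s <= r <= t /\ y = x + r *: u)).
Proof.
case=> k0 [Kk0 xE].
have xu : edot x u = 0 by rewrite xE proj_perp_u.
set A := K `&` [set k | edot (proj_perp u k - x) (proj_perp u k - x) <= 0].
have cA : compact A.
  apply: compact_closedI; first exact: compK.
  by apply: closed_sub; apply: edot_cont; exact: proj_cont.
have A0 : exists a, A a by exists k0; split => //=; rewrite -xE subrr edot0l.
have Achar : forall k, A k <-> K k /\ exists r, k = x + r *: u.
  move=> k; split.
    move=> [Kk /= hk].
    have : edot (proj_perp u k - x) (proj_perp u k - x) = 0.
      by apply/eqP; rewrite eq_le hk edot_ge0.
    move/edot_eq0/eqP; rewrite subr_eq0 => /eqP Pk.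
    by split => //; exists (edot k u); rewrite {1}(proj_decomp u k) Pk.
  by move=> [Kk [r Ek]]; subst k; split => //=; rewrite proj_id // subrr edot0l.
have [kmin [Amin Hmin]] := argmin _ _ cA A0 (cont_dot u).
have [kmax [Amax Hmax]] := argmin _ _ cA A0 (cont_dotN u).
have Hb k : A k -> edot kmin u <= edot k u <= edot kmax u.
  move=> Ak; rewrite Hmin //=; have := Hmax _ Ak; by rewrite !edotNl lerN2.
have [Kmin [r1 E1]] := (Achar _).1 Amin.
have [Kmax [r2 E2]] := (Achar _).1 Amax.
have s1 : edot kmin u = r1 by rewrite E1 dot_line.
have s2 : edot kmax u = r2 by rewrite E2 dot_line.
exists r1, r2; split; first by have /andP[] := Hb _ Amin; rewrite -s1 -s2.
split; first by rewrite -E1.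
split; first by rewrite -E2.
move=> y; split.
  move=> /Achar Ay; have := Hb _ Ay; have [_ [r ->]] := (Achar _).1 Ay.
  by rewrite dot_line // -s1 -s2 => hr; exists r.
move=> [r [/andP[h1 h2] ->]]; split; last by exists r.
have [e12 | lt12] := eqVneq r1 r2.
  have -> : r = r1 by apply/eqP; rewrite eq_le h1 andbT e12.
  by rewrite -E1.
have d0 : 0 < r2 - r1 by rewrite subr_gt0 lt_neqAle lt12 (le_trans h1 h2).
set mu := (r - r1) / (r2 - r1).
have hm : 0 <= mu <= 1.
  apply/andP; split; first by apply: divr_ge0; lra.
  by rewrite ler_pdivrMr // mul1r; lra.
rewrite E2 in Kmax; rewrite E1 in Kmin.
have := @convK K F HK _ _ mu Kmax Kmin hm.
suff -> : mu *: (x + r2 *: u) + (1 - mu) *: (x + r1 *: u) = x + r *: u by [].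
have hmr : mu * r2 + (1 - mu) * r1 = r by rewrite /mu; field; rewrite gt_eqF.
by rewrite -[X in _ = x + X *: u]hmr; apply/rowP => j; rewrite !mxE; ring.
Qed.


Lemma sepB x' : edot x' u = 0 -> ~ in_proj u K x' -> (exists k, K k) ->
  exists k0 v, K k0 /\ edot v v = 1 /\ edot v u = 0 /\
   (forall k, K k -> cball (k0 - v) k) /\
   (forall k, K k -> edot (proj_perp u k0 - x') (proj_perp u k0 - x') <=
                    edot (proj_perp u k - x') (proj_perp u k - x')) /\
   1 < edot (x' - proj_perp u k0 + v) (x' - proj_perp u k0 + v).
Proof.
move=> x'u nP Kne.
have cg : continuous (fun k => edot (proj_perp u k - x') (proj_perp u k - x')).
  by apply: edot_cont; exact: proj_cont.
have [k0 [Kk0 Hmin]] := argmin _ _ compK Kne cg.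
set e := proj_perp u k0 - x' in Hmin *.
set D := edot e e in Hmin *.
have D0 : 0 < D.
  rewrite lt_neqAle edot_ge0 andbT; apply/eqP => /esym /edot_eq0 /eqP.
  rewrite subr_eq0 => /eqP hk; apply: nP; exists k0; split => //.
have eu : edot e u = 0 by rewrite /e edotBl proj_perp_u // x'u subrr.
have sD0 : 0 < Num.sqrt D by rewrite sqrtr_gt0.
set lam := (Num.sqrt D)^-1.
have lam0 : 0 < lam by rewrite invr_gt0.
have lD : lam ^+ 2 * D = 1.
  by rewrite /lam -{2}(sqr_sqrtr (ltW D0)) exprVn mulVf // expf_neq0 // gt_eqF.
set v := (- lam) *: e.
have vv : edot v v = 1 by rewrite /v edot_sqZ sqrrN.
have vu : edot v u = 0 by rewrite /v edotZl eu mulr0.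
have Hs : forall k, K k -> edot (k - k0) v <= 0.
  move=> k Kk.
  have -> : k - k0 = (proj_perp u k - proj_perp u k0) + (edot k u - edot k0 u) *: u.
    by rewrite /proj_perp; apply/rowP => j; rewrite !mxE; ring.
  rewrite /v edotZr edotDl edotZl (edotC u) eu mulr0 addr0.
  set b := edot (proj_perp u k - proj_perp u k0) e.
  suff : 0 <= b by nra.
  rewrite leNgt; apply/negP => b0.
  set W := edot (proj_perp u k - proj_perp u k0) (proj_perp u k - proj_perp u k0).
  have W0 : 0 <= W := edot_ge0 _.
  have Wb : 0 < W - b by lra.
  set mu := - b / (W - b).
  have hmW : mu * (W - b) = - b by rewrite /mu mulfVK // gt_eqF.
  have mu0 : 0 < mu by rewrite /mu divr_gt0 // oppr_gt0.
  have mu1 : mu <= 1 by rewrite /mu ler_pdivrMr // mul1r; lra.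
  have hm : 0 <= mu <= 1 by rewrite (ltW mu0) mu1.
  have := Hmin _ (@convK K F HK _ _ mu Kk Kk0 hm).
  have -> : proj_perp u (mu *: k + (1 - mu) *: k0) - x' =
      e + mu *: (proj_perp u k - proj_perp u k0).
    by rewrite proj_lin /e; apply/rowP => j; rewrite !mxE; ring.
  rewrite edot_sq edotZr edot_sqZ (edotC e) -/b -/W -/D => h.
  have h2 : 0 <= mu * (2 * b + mu * W).
    have -> : mu * (2 * b + mu * W) = 2 * (mu * b) + mu ^+ 2 * W by ring.
    lra.
  have h3 : 0 <= 2 * b + mu * W.
    by rewrite -(pmulr_rge0 _ mu0).
  have h4 : 0 <= (W - b) * (2 * b + mu * W) by apply: mulr_ge0; lra.
  have h5 : (W - b) * (2 * b + mu * W) = b * (W - 2 * b).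
    have -> : (W - b) * (2 * b + mu * W) = 2 * b * (W - b) + (mu * (W - b)) * W by ring.
    rewrite hmW; ring.
  nra.
exists k0, v; split => //; split => //; split => //; split.
  exact: (@support K F HK k0 v Kk0 vv Hs).
split => // .
have -> : x' - proj_perp u k0 + v = (- (1 + lam)) *: e.
  by rewrite /v /e; apply/rowP => j; rewrite !mxE; ring.
rewrite edot_sqZ sqrrN -/D.
nra.
Qed.


Lemma degen x s r : in_proj u K x ->
  (forall k, K k -> proj_perp u k = x -> edot k u = s) -> r != 0 ->
  exists c, (forall p, steiner u K p -> cball c p) /\ ~ cball c (x + r *: u).
Proof.
move=> [kx [Kkx xE]] Hs r0.
have xu : edot x u = 0 by rewrite xE proj_perp_u.
have nr0 : 0 < `|r| by rewrite normr_gt0.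
case: (pselect (forall k, K k -> proj_perp u k = x)) => [Hall | Hex].
  set rho := r / `|r|.
  have rho2 : rho ^+ 2 = 1.
    by rewrite /rho expr_div_n real_normK ?num_real // divff // expf_neq0.
  have rrho : r * rho = `|r|.
    by rewrite /rho mulrA -expr2 -real_normK ?num_real // expr2 mulfK // gt_eqF.
  exists (x - rho *: u); split.
    move=> p [x1 [y1 [[k1 [Kk1 x1E]] [-> [s1 [t1 [K1 [K2 Hy]]]]]]]].
    have x1x : x1 = x by rewrite x1E Hall.
    rewrite x1x in K1 K2 *.
    have hs1 : s1 = s by rewrite -(@dot_line x u s1 uu xu); apply: Hs => //; rewrite proj_id.
    have ht1 : t1 = s by rewrite -(@dot_line x u t1 uu xu); apply: Hs => //; rewrite proj_id.
    have y10 : y1 = 0 by apply/normr0_eq0; move: Hy; rewrite hs1 ht1 subrr; have := normr_ge0 y1; lra.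
    rewrite y10 scale0r addr0; apply/cballE'.
    have -> : x - (x - rho *: u) = rho *: u by apply/rowP => j; rewrite !mxE; ring.
    by rewrite edot_sqZ uu mulr1 rho2.
  move/cballE'.
  have -> : x + r *: u - (x - rho *: u) = (r + rho) *: u by apply/rowP => j; rewrite !mxE; ring.
  rewrite edot_sqZ uu mulr1 sqrrD rrho rho2; have := sqr_ge0 r; lra.
have [k1 [Kk1 nk1]] : exists k1, K k1 /\ proj_perp u k1 <> x.
  apply: contrapT => H; apply: Hex => k Kk; apply: contrapT => hne; apply: H; exists k; split => //.
set w := proj_perp u k1 - x.
have wu : edot w u = 0 by rewrite /w edotBl proj_perp_u // xu subrr.
set W := edot w w.
have W0 : 0 < W.
  rewrite lt_neqAle edot_ge0 andbT; apply/eqP => /esym /edot_eq0 /eqP.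
  by rewrite subr_eq0 => /eqP.
set lam := r ^+ 2 / (8 * (W + 1)).
have r20 : 0 < r ^+ 2 by rewrite -real_normK ?num_real //; exact: exprn_gt0.
have lam0 : 0 < lam by rewrite /lam divr_gt0 //; lra.
have lamE : lam * (8 * (W + 1)) = r ^+ 2 by rewrite /lam mulfVK // gt_eqF //; lra.
set x' := x - lam *: w.
have x'u : edot x' u = 0 by rewrite /x' edotBl edotZl wu xu; ring.
have nP : ~ in_proj u K x'.
  move=> [k2 [Kk2 x'E]].
  set mu := lam / (1 + lam).
  have mulam : mu * (1 + lam) = lam by rewrite /mu mulfVK // gt_eqF //; lra.
  have mu0 : 0 < mu by rewrite /mu divr_gt0 //; lra.
  have mu1 : mu < 1 by rewrite /mu ltr_pdivrMr; lra.
  have hm : 0 <= mu <= 1 by rewrite (ltW mu0) (ltW mu1).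
  set D12 := edot (k1 - k2) (k1 - k2).
  have D12p : 0 < D12.
    rewrite lt_neqAle edot_ge0 andbT; apply/eqP => /esym /edot_eq0 /eqP.
    rewrite subr_eq0 => /eqP k12.
    have : (1 + lam) *: w = 0.
      have -> : (1 + lam) *: w = proj_perp u k1 - x' by rewrite /x' /w; apply/rowP => j; rewrite !mxE; ring.
      by rewrite x'E k12 subrr.
    move=> /(congr1 (fun z => edot z z)); rewrite edot_sqZ edot0l => /eqP.
    rewrite mulf_eq0 => /orP[]; [by rewrite expf_eq0 /= gt_eqF // addr_gt0 | by move=> /eqP hW; move: W0; rewrite /W hW ltxx].
  set kc := mu *: k1 + (1 - mu) *: k2.
  have Pkc : proj_perp u kc = x.
    rewrite /kc proj_lin -x'E.
    have -> : proj_perp u k1 = x + w by rewrite /w addrC subrK.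
    rewrite /x'.
    have -> : mu *: (x + w) + (1 - mu) *: (x - lam *: w) = x + (mu * (1 + lam) - lam) *: w.
      by apply/rowP => j; rewrite !mxE; ring.
    by rewrite mulam subrr scale0r addr0.
  set de := mu * (1 - mu) * D12 / 2.
  have de0 : 0 < de by rewrite /de; apply: divr_gt0 => //; apply: mulr_gt0 => //; apply: mulr_gt0; lra.
  have uu1 : edot u u <= 1 by rewrite uu.
  have K1 := @fat K F HK k1 k2 mu u Kk1 Kk2 hm uu1.
  have uu' : edot (- u) (- u) <= 1 by rewrite edotNl edotNr opprK uu.
  have K2 := @fat K F HK k1 k2 mu (- u) Kk1 Kk2 hm uu'.
  rewrite -/kc -/D12 -/de in K1 K2.
  have dkc : kc = x + edot kc u *: u by rewrite {1}(proj_decomp u kc) Pkc.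
  have E1 : proj_perp u (kc + de *: u) = x.
    by rewrite dkc -addrA -scalerDl proj_id.
  have E2 : proj_perp u (kc + de *: - u) = x.
    by rewrite dkc -addrA scalerN -scaleNr -scalerDl proj_id.
  have := Hs _ K1 E1; have := Hs _ K2 E2.
  move=> h1 h2; rewrite edotDl edotZl edotNl uu in h1; rewrite edotDl edotZl uu in h2.
  move: h1 h2 de0; clear; move: (edot kc u) de => a b; lra.
have [k0 [v [Kk0 [vv [vu [Hsup [Hmin _]]]]]]] := @sepB x' x'u nP (ex_intro _ kx Kkx).
exists (proj_perp u (k0 - v)); split.
  exact: (@ball_steiner u (k0 - v) K uu Hsup).
move/cballE'.
have hmin := Hmin _ Kkx; rewrite -xE in hmin.
set a := x - proj_perp u k0.
have -> : x + r *: u - proj_perp u (k0 - v) = (a + v) + r *: u.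
  rewrite /a /proj_perp edotBl vu subr0; apply/rowP => j; rewrite !mxE; ring.
have au : edot (a + v) u = 0 by rewrite /a edotDl edotBl proj_perp_u // xu vu; ring.
rewrite edot_perp // edot_sq vv.
have hxx : edot (x - x') (x - x') = lam ^+ 2 * W.
  have -> : x - x' = lam *: w by rewrite /x'; apply/rowP => j; rewrite !mxE; ring.
  by rewrite edot_sqZ.
have hA : edot a a <= 4 * (lam ^+ 2 * W).
  have -> : a = (x - x') + (x' - proj_perp u k0) by rewrite /a; apply/rowP => j; rewrite !mxE; ring.
  rewrite edot_sq.
  have := @edot_amgm (x - x') (x' - proj_perp u k0) 1 ltr01.
  rewrite expr1n mul1r divr1.
  have -> : edot (x' - proj_perp u k0) (x' - proj_perp u k0) = edot (proj_perp u k0 - x') (proj_perp u k0 - x').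
    by rewrite !edot_sqB (edotC x' (proj_perp u k0)); ring.
  rewrite hxx in hmin; rewrite !hxx.
  move: hmin; move: (edot (x - x') (x' - proj_perp u k0)) (edot (proj_perp u k0 - x') (proj_perp u k0 - x')) => p q.
  lra.
have hlW : lam ^+ 2 * W <= r ^+ 4 / 64.
  have h1 : lam ^+ 2 * W <= lam ^+ 2 * (8 * (W + 1)) ^+ 2 / 64.
    rewrite ler_pdivlMr // -mulrA; apply: ler_wpM2l; first exact: sqr_ge0.
    nra.
  apply: le_trans h1 _; rewrite -exprMn lamE -exprM /=; lra.
set ep := r ^+ 2 / 2.
have ep0 : 0 < ep by rewrite /ep; lra.
have := @edot_amgm (- a) v ep ep0.
rewrite edotNl edotNl edotNr opprK vv mulr1 ler_pdivlMr // => hv.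
set A := edot a a in hA hv *.
set Y := edot a v in hv *.
have A0 : 0 <= A := edot_ge0 _.
have r4 : r ^+ 4 = r ^+ 2 * r ^+ 2 by rewrite -exprD.
have hep : ep * ep = r ^+ 4 / 4 by rewrite /ep r4; field.
apply/negP; rewrite -ltNge -(ltr_pM2l ep0) mulr1.
have -> : ep * (A + 2 * Y + 1 + r ^+ 2) = ep * A + (2 * Y * ep) + ep + ep * r ^+ 2 by ring.
have hepr : ep * r ^+ 2 = r ^+ 4 / 2 by rewrite /ep r4; field.
have hepA : 0 <= ep * A by apply: mulr_ge0; lra.
have r40 : 0 < r ^+ 4 by rewrite r4; apply: mulr_gt0.
move: hv hA hlW hep hepr hepA r40 ep0 A0; clear; move: (A) (Y) (ep) (lam ^+ 2 * W) (r ^+ 4) => A1 Y1 e1 L1 R1.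
lra.
Qed.

End Body.


Lemma main_aux (K : V -> Prop) (u : V) :
  ball_body K -> (exists x, K x) -> Defs.bounded_set K -> enorm u = 1 ->
  (forall (x : V) (s t : R), in_proj u K x ->
     (forall y, (K y /\ exists r : R, y = x + r *: u) <->
                (exists r : R, s <= r <= t /\ y = x + r *: u)) ->
     exists z w : V,
       (forall y, K y -> lens z w y) /\
       ebdry (lens z w) (x + t *: u) /\
       ebdry (lens z w) (x + s *: u) /\
       ball_body (steiner u (lens z w))) ->
  ball_body (steiner u K).
Proof.
move=> [F HK] [k0 Kk0] Kb Hu Hyp.
have uu := @enorm1 u Hu.
exists (fun c => forall p, steiner u K p -> cball c p) => y; split.
  by move=> My c Hc; exact: Hc.
move=> Hall; apply: contrapT => nMy.
suff [c [h1 h2]] : exists c, (forall p, steiner u K p -> cball c p) /\ ~ cball c y.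
  by exact: h2 (Hall c h1).
have [x [r [xu yE]]] : exists x r, edot x u = 0 /\ y = x + r *: u.
  by exists (proj_perp u y), (edot y u); split; [exact: proj_perp_u | exact: proj_decomp].
subst y.
case: (pselect (in_proj u K x)) => [inP | ninP]; last first.
  have [k1 [v [Kk1 [vv [vu [Hsup [_ Hgt]]]]]]] :=
    @sepB K F u HK Kb uu x xu ninP (ex_intro _ k0 Kk0).
  exists (proj_perp u (k1 - v)); split; first exact: (@ball_steiner u (k1 - v) K uu Hsup).
  move/cballE'.
  have -> : x + r *: u - proj_perp u (k1 - v) = (x - proj_perp u k1 + v) + r *: u.
    rewrite /proj_perp edotBl vu subr0; apply/rowP => j; rewrite !mxE; ring.
  have au : edot (x - proj_perp u k1 + v) u = 0.
    by rewrite edotDl edotBl proj_perp_u // xu vu; ring.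
  rewrite edot_perp //; have := sqr_ge0 r; lra.
have [s [t [st [Ks [Kt Hiff]]]]] := @fiber K F u HK Kb uu x inP.
have notle : ~ (2 * `|r| <= t - s).
  by move=> h; apply: nMy; exists x, r; split => //; split => //; exists s, t.
case: (ltrP s t) => [lst | hts].
  have [z [w [Ksub [bt [bs [G HG]]]]]] := Hyp x s t inP Hiff.
  have nS : ~ steiner u (lens z w) (x + r *: u).
    move=> [x1 [y1 [[l [Ll x1E]] [eq [s1 [t1 [L1 [L2 hy]]]]]]]].
    have x1u : edot x1 u = 0 by rewrite x1E proj_perp_u.
    have ry : r = y1.
      have := congr1 (fun p => edot p u) eq; rewrite /= !dot_line //.
    subst y1.
    have xx : x1 = x by apply/esym; move/addIr: eq.
    rewrite xx in L1 L2.
    have hlt : t - s < t1 - s1 by rewrite ltNge; apply/negP => h; apply: notle; lra.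
    case: (ltrP t t1) => [tt1 | t1t].
      have hg : s < t < t1 by rewrite lst tt1.
      exact: (@chord_interior z w x u s t1 t uu (Ksub _ Ks) L2 hg bt).
    have hg : s1 < s < t by rewrite lst andbT; lra.
    exact: (@chord_interior z w x u s1 t s uu L1 (Ksub _ Kt) hg bs).
  have [c [Gc nc]] : exists c, G c /\ ~ cball c (x + r *: u).
    apply: contrapT => H; apply: nS; apply/HG => c Gc; apply: contrapT => hn.
    by apply: H; exists c.
  exists c; split => // p Mp.
  exact: ((HG p).1 (@steiner_mono u K (lens z w) Ksub p Mp) c Gc).
have ets : t = s by apply/eqP; rewrite eq_le hts st.
subst t.
have r0 : r != 0.
  apply/eqP => r0; apply: notle; rewrite r0 normr0 subrr mulr0 lexx //.
have Hs : forall k, K k -> proj_perp u k = x -> edot k u = s.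
  move=> k Kk Pk.
  have kE : k = x + edot k u *: u by rewrite {1}(proj_decomp u k) Pk.
  have [r' [/andP[h1 h2] kE']] := (Hiff k).1 (conj Kk (ex_intro _ _ kE)).
  by rewrite kE' dot_line //; apply/eqP; rewrite eq_le h1 h2.
exact: (@degen K F u HK Kb uu x s r inP Hs r0).
Qed.

End Alg.

Theorem proposition4p2 (R : realType) (n : nat) (K : 'rV[R]_n -> Prop)
  (u : 'rV[R]_n) :
  ball_body K -> (exists x, K x) -> Defs.bounded_set K -> enorm u = 1 ->
  (forall (x : 'rV[R]_n) (s t : R), in_proj u K x ->
     (forall y, (K y /\ exists r : R, y = x + r *: u) <->
                (exists r : R, s <= r <= t /\ y = x + r *: u)) ->
     exists z w : 'rV[R]_n,
       (forall y, K y -> lens z w y) /\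
       ebdry (lens z w) (x + t *: u) /\
       ebdry (lens z w) (x + s *: u) /\
       ball_body (steiner u (lens z w))) ->
  ball_body (steiner u K).
Proof. exact: main_aux. Qed.
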